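(* Let $f$ be a formula with $m$ clauses over $n$ variables, each clause being a CNF, cardinality, XOR or NAE constraint, and let $F=\sum_c\mathrm{FE}_c$, a multilinear polynomial on $[-1,1]^n$ with values in $[-m,m]$. Run projected gradient descent with step size $\eta=\frac{1}{nm}$ from any starting point $x_0\in[-1,1]^n$: $$x_{t+1}=\Pi_{[-1,1]^n}\big(x_t-\eta\nabla F(x_t)\big)=x_t-\eta G(x_t).$$ Then within $O\big(\frac{nm^2}{\epsilon^2}\big)$ iterations it reaches an $\epsilon$-projected-critical point, i.e. an iterate $x_t$ with $\|G(x_t)\|_2<\epsilon$.
   Context: Boolean values are encoded as $\pm1$, with $-1$ standing for True. $\mathrm{FE}_c$ is the Fourier expansion of clause $c$, i.e. the unique multilinear polynomial agreeing with $c$ (as a $\{\pm1\}$-valued function) on $\{\pm1\}^n$. $\Pi_{[-1,1]^n}(y)=\arg\min_{x\in[-1,1]^n}\tfrac12\|x-y\|_2^2$ is the Euclidean projection onto the cube. The gradient mapping is $G(x)=\frac1\eta\big(x-\Pi_{[-1,1]^n}(x-\eta\nabla F(x))\big)$. *)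

(* Defs.v *)
From HB Require Import structures.
From mathcomp Require Import all_boot all_order all_algebra.
From mathcomp Require Import all_classical all_reals all_analysis.
Set Implicit Arguments. Unset Strict Implicit. Unset Printing Implicit Defensive.
Import Order.TTheory GRing.Theory Num.Theory.
Import numFieldNormedType.Exports.
Local Open Scope ring_scope.

Inductive ctype := CNF | Card of nat | XOR | NAE.

(* A literal is (variable, negated?). *)
Record clause (n : nat) := Clause { ctyp : ctype; lits : seq ('I_n * bool) }.

(* Boolean assignment: b i = true means variable i is True (encoded -1). *)
Definition lit_true n (b : {ffun 'I_n -> bool}) (l : 'I_n * bool) : bool :=
  b l.1 (+) l.2.

Definition clause_sat n (c : clause n) (b : {ffun 'I_n -> bool}) : bool :=
  let vs := map (lit_true b) (lits c) in
  match ctyp c with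
  | CNF => has id vs
  | Card k => (k <= count id vs)%N
  | XOR => odd (count id vs)
  | NAE => has id vs && has negb vs
  end.

Definition pm1 {R : realType} (t : bool) : R := if t then -1 else 1.

Definition clause_val {R : realType} n (c : clause n) (b : {ffun 'I_n -> bool}) : R :=
  pm1 (clause_sat c b).

(* Fourier expansion FE_c: the multilinear interpolation of c,
   sum over all points a of {+-1}^n of c(a) * prod_i (1 + a_i x_i)/2. *)
Definition FE {R : realType} n (c : clause n) (x : 'rV[R]_n) : R :=
  \sum_(b : {ffun 'I_n -> bool})
     clause_val c b * \prod_(i < n) ((1 + pm1 (b i) * x ord0 i) / 2).

Definition Fobj {R : realType} n (f : seq (clause n)) (x : 'rV[R]_n) : R :=
  \sum_(c <- f) FE c x.

Definition ebasis {R : realType} n (i : 'I_n) : 'rV[R]_n := \row_j (i == j)%:R.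

Definition grad {R : realType} n (F : 'rV[R]_n -> R) (x : 'rV[R]_n) : 'rV[R]_n :=
  \row_i ('D_(ebasis i) F x).

Definition in_cube {R : realType} n (x : 'rV[R]_n) : Prop :=
  forall i, -1 <= x ord0 i <= 1.

Definition sqnorm {R : realType} n (v : 'rV[R]_n) : R :=
  \sum_(i < n) (v ord0 i) ^+ 2.

Definition norm2 {R : realType} n (v : 'rV[R]_n) : R := Num.sqrt (sqnorm v).

Definition is_cube_proj {R : realType} n (y p : 'rV[R]_n) : Prop :=
  in_cube p /\
  forall q, in_cube q -> sqnorm (p - y) / 2 <= sqnorm (q - y) / 2.

(* gradient mapping G(x) = (x - Pi(x - eta grad F(x)))/eta, with the projection
   given relationally as p *)
Definition grad_map {R : realType} n (eta : R) (x p : 'rV[R]_n) : 'rV[R]_n :=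
  eta^-1 *: (x - p).

(* Main.v *)
Require Import Defs.
From HB Require Import structures.
From mathcomp Require Import all_boot all_order all_algebra.
From mathcomp Require Import all_classical all_reals all_analysis.
From mathcomp Require Import ring lra zify.
Import Order.TTheory GRing.Theory Num.Theory.
Local Open Scope ring_scope.

Definition wt {R : realType} (v : bool) (s : R) : R := (1 + pm1 v * s) / 2.
Definition PP {R : realType} {n} (a : {ffun 'I_n -> bool} -> R) (x : 'rV[R]_n) : R :=
  \sum_(b : {ffun 'I_n -> bool}) a b * \prod_(i < n) wt (b i) (x ord0 i).
Definition ai {R : realType} {n} (a : {ffun 'I_n -> bool} -> R) (i : 'I_n) :=
  fun b : {ffun 'I_n -> bool} => a b * pm1 (b i).
Definition setc {R : realType} {n} (x : 'rV[R]_n) (i : 'I_n) (s : R) : 'rV[R]_n :=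
  \row_j (if j == i then s else x ord0 j).

Lemma wt_ge0 {R : realType} v (s : R) : -1 <= s <= 1 -> 0 <= wt v s.
Proof. by case: v; rewrite /wt /pm1 => /andP[? ?]; lra. Qed.

Lemma wt_sum {R : realType} (s : R) : \sum_(v : bool) wt v s = 1.
Proof. by rewrite big_bool /wt /pm1 /=; field. Qed.

Lemma prod_wt_sum {R : realType} n (x : 'rV[R]_n) :
  \sum_(b : {ffun 'I_n -> bool}) \prod_(i < n) wt (b i) (x ord0 i) = 1.
Proof.
rewrite -(bigA_distr_bigA (fun i v => wt v (x ord0 i))).
by rewrite big1 // => i _; rewrite wt_sum.
Qed.

Lemma PP_bound {R : realType} n (a : {ffun 'I_n -> bool} -> R) (M : R) x :
  in_cube x -> (forall b, `|a b| <= M) -> `|PP a x| <= M.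
Proof.
move=> hx ha; rewrite /PP.
apply: le_trans (ler_norm_sum _ _ _) _.
have -> : M = \sum_(b : {ffun 'I_n -> bool}) M * \prod_(i < n) wt (b i) (x ord0 i).
  by rewrite -mulr_sumr prod_wt_sum mulr1.
apply: ler_sum => b _; rewrite normrM.
  have hp : 0 <= \prod_(i < n) wt (b i) (x ord0 i).
    by apply: prodr_ge0 => i _; apply: wt_ge0; apply: hx.
  by rewrite (ger0_norm hp); apply: ler_wpM2r.
Qed.

Lemma prod_setc {R : realType} {n} (x : 'rV[R]_n) i s (b : {ffun 'I_n -> bool}) :
  \prod_(j < n) wt (b j) (setc x i s ord0 j) =
  (1 + pm1 (b i) * s) * \prod_(j < n) wt (b j) (setc x i 0 ord0 j).
Proof.
rewrite (bigD1 i) //= [in RHS](bigD1 i) //= !mxE eqxx.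
rewrite mulrA; congr (_ * _).
  by rewrite /wt; field.
by apply: eq_bigr => j hj; rewrite !mxE (negbTE hj).
Qed.

Lemma PP_setc {R : realType} {n} (a : {ffun 'I_n -> bool} -> R) x i s :
  PP a (setc x i s) = PP a (setc x i 0) + s * PP (ai a i) (setc x i 0).
Proof.
rewrite /PP mulr_sumr -big_split /=; apply: eq_bigr => b _.
rewrite prod_setc /ai; ring.
Qed.

Lemma setc_id {R : realType} {n} (x : 'rV[R]_n) i : x = setc x i (x ord0 i).
Proof. by apply/rowP => j; rewrite !mxE; case: eqP => // ->. Qed.

Lemma PP_diff {R : realType} {n} (a : {ffun 'I_n -> bool} -> R) x i s t :
  PP a (setc x i s) - PP a (setc x i t) = (s - t) * PP (ai a i) (setc x i 0).
Proof. rewrite (PP_setc a x i s) (PP_setc a x i t); ring. Qed.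

Lemma setc_setc {R : realType} {n} (x : 'rV[R]_n) i s t : setc (setc x i s) i t = setc x i t.
Proof. by apply/rowP => j; rewrite !mxE; case: eqP. Qed.

Lemma ebasis_setc {R : realType} {n} (x : 'rV[R]_n) i h :
  h *: ebasis i + x = setc x i (x ord0 i + h).
Proof.
apply/rowP => j; rewrite !mxE.
case: eqP => [->|/eqP hj]; first by rewrite eqxx mulr1 addrC.
by rewrite eq_sym (negbTE hj) mulr0 add0r.
Qed.

Lemma PP_derive {R : realType} {n} (a : {ffun 'I_n -> bool} -> R) x i :
  'D_(ebasis i) (PP a) x = PP (ai a i) (setc x i 0).
Proof.
rewrite /derive; apply: lim_near_cst; first exact: norm_hausdorff.
rewrite /dnbhs /within /= /prop_near1 /mkset /=.
exists 1; first exact: ltr01.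
move=> h _ hh.
have E : PP a (h *: ebasis i + x) - PP a x = h * PP (ai a i) (setc x i 0).
  rewrite ebasis_setc. rewrite [X in _ - PP a X](setc_id x i). rewrite PP_diff.
  by rewrite addrAC subrr add0r.
rewrite E; exact: (mulKf hh).
Qed.

Lemma sum_ltS {R : realType} {n} (F : 'I_n -> R) k (hk : (k < n)%N) :
  \sum_(j < n | (j < k.+1)%N) F j = \sum_(j < n | (j < k)%N) F j + F (Ordinal hk).
Proof.
rewrite (bigD1 (Ordinal hk)) /=; last by rewrite ltnSn.
rewrite addrC; congr (_ + _); apply: eq_bigl => j.
rewrite -val_eqE /=; case: (ltngtP j k) => //=; lia.
Qed.

Lemma split3 {R : realType} {n} (F : 'I_n -> R) (i : 'I_n) :
  \sum_j F j = \sum_(j < n | (j < i)%N) F j + F i + \sum_(j < n | (i < j)%N) F j.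
Proof.
rewrite (bigD1 i) //= (bigID (fun j : 'I_n => (j < i)%N)) /=.
rewrite addrA [F i + _]addrC; congr (_ + _ + _); apply: eq_bigl => j.
  rewrite -val_eqE; case: (ltngtP j i) => //=; lia.
rewrite -val_eqE; case: (ltngtP j i) => //=; lia.
Qed.

Lemma pair_id {R : realType} {n} (a : 'I_n -> R) :
  (\sum_i a i) ^+ 2 = 2 * \sum_i a i * \sum_(j < n | (j < i)%N) a j + \sum_i a i ^+ 2.
Proof.
rewrite expr2 mulr_suml.
have E : forall i, a i * \sum_j a j =
   a i * \sum_(j < n | (j < i)%N) a j + a i ^+ 2 + \sum_(j < n | (i < j)%N) a i * a j.
  move=> i; rewrite (split3 a i) !mulrDr -mulr_sumr expr2 //.
rewrite (eq_bigr _ (fun i _ => E i)) !big_split /=.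
have -> : \sum_(i < n) \sum_(j < n | (i < j)%N) a i * a j = \sum_(i < n) a i * \sum_(j < n | (j < i)%N) a j.
  rewrite (eq_bigr (fun i : 'I_n => \sum_(j < n) (if (i < j)%N then a i * a j else 0))); last first.
    by move=> i _; rewrite big_mkcond.
  rewrite exchange_big /=; apply: eq_bigr => j _.
  rewrite mulr_sumr [RHS]big_mkcond /=; apply: eq_bigr => i _.
  by case: ifP => // _; rewrite mulrC.
ring.
Qed.

Lemma cs_sum {R : realType} {n} (a : 'I_n -> R) :
  (\sum_i a i) ^+ 2 <= n%:R * \sum_i a i ^+ 2.
Proof.
have H : 0 <= \sum_i \sum_j (a i - a j) ^+ 2.
  by apply: sumr_ge0 => i _; apply: sumr_ge0 => j _; apply: sqr_ge0.
have E : \sum_i \sum_j (a i - a j) ^+ 2 =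
   2 * (n%:R * \sum_i a i ^+ 2) - 2 * (\sum_i a i) ^+ 2.
  have E1 : forall i, \sum_j (a i - a j) ^+ 2 =
     n%:R * a i ^+ 2 + \sum_j a j ^+ 2 - 2 * (a i * \sum_j a j).
    move=> i.
    rewrite [RHS](_ : _ = \sum_(j<n) (a i ^+ 2 + a j ^+ 2 - 2 * (a i * a j))).
      by apply: eq_bigr => j _; ring.
    rewrite !big_split /= sumrN sumr_const card_ord -!mulr_sumr -mulr_natl mulrA; ring.
  rewrite (eq_bigr _ (fun i _ => E1 i)) !big_split /= sumrN sumr_const card_ord.
  rewrite -!mulr_sumr -mulr_suml -mulr_natl expr2. ring.
lra.
Qed.

Definition mix {R : realType} {n} (x y : 'rV[R]_n) (k : nat) : 'rV[R]_n :=
  \row_j (if (j < k)%N then y ord0 j else x ord0 j).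

Lemma mix0 {R : realType} {n} (x y : 'rV[R]_n) : mix x y 0 = x.
Proof. by apply/rowP => j; rewrite !mxE. Qed.

Lemma mixn {R : realType} {n} (x y : 'rV[R]_n) : mix x y n = y.
Proof. by apply/rowP => j; rewrite !mxE ltn_ord. Qed.

Lemma mix_cube {R : realType} {n} (x y : 'rV[R]_n) k :
  in_cube x -> in_cube y -> in_cube (mix x y k).
Proof. by move=> hx hy j; rewrite !mxE; case: ifP. Qed.

Lemma setc_cube {R : realType} {n} (x : 'rV[R]_n) i s :
  in_cube x -> -1 <= s <= 1 -> in_cube (setc x i s).
Proof. by move=> hx hs j; rewrite !mxE; case: ifP. Qed.

Lemma mixS {R : realType} {n} (x y : 'rV[R]_n) k (hk : (k < n)%N) :
  mix x y k.+1 = setc (mix x y k) (Ordinal hk) (y ord0 (Ordinal hk)).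
Proof.
apply/rowP => j; rewrite !mxE -val_eqE /=.
case: (ltngtP j k) => h.
- by rewrite ltnS (ltnW h).
- by rewrite ltnS leqNgt h.
- by rewrite h ltnS leqnn; congr (y ord0 _); apply: val_inj.
Qed.

Lemma mix_self {R : realType} {n} (x y : 'rV[R]_n) k (hk : (k < n)%N) :
  mix x y k = setc (mix x y k) (Ordinal hk) (x ord0 (Ordinal hk)).
Proof.
rewrite [LHS](setc_id _ (Ordinal hk)); congr setc.
by rewrite !mxE ltnn.
Qed.

Lemma ai_bound {R : realType} {n} (a : {ffun 'I_n -> bool} -> R) (M : R) i :
  (forall b, `|a b| <= M) -> forall b, `|ai a i b| <= M.
Proof. by move=> ha b; rewrite /ai normrM; case: (b i); rewrite /pm1 ?normrN normr1 mulr1. Qed.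

Lemma inner {R : realType} {n} (b : {ffun 'I_n -> bool} -> R) (M : R) (x y : 'rV[R]_n) :
  in_cube x -> in_cube y -> (forall c, `|b c| <= M) ->
  forall k, (k <= n)%N ->
  `|PP b (mix x y k) - PP b x| <= M * \sum_(j < n | (j < k)%N) `|y ord0 j - x ord0 j|.
Proof.
move=> hx hy hb; elim=> [|k IH] hk.
  by rewrite mix0 subrr normr0 big_pred0 ?mulr0 // => j.
have hk' : (k < n)%N by [].
rewrite sum_ltS mulrDr.
have -> : PP b (mix x y k.+1) - PP b x =
   (PP b (mix x y k.+1) - PP b (mix x y k)) + (PP b (mix x y k) - PP b x) by ring.
apply: le_trans (ler_normD _ _) _.
rewrite addrC; apply: lerD; first exact: IH (ltnW hk).
rewrite (mixS x y k hk') {2}(mix_self x y k hk') PP_diff normrM mulrC.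
apply: ler_pM => //.
apply: (@PP_bound R n (ai b (Ordinal hk')) M).
  apply: setc_cube; first exact: mix_cube.
  lra.
exact: ai_bound.
Qed.

Lemma setc_mix {R : realType} {n} (x y : 'rV[R]_n) k i :
  setc (mix x y k) i 0 = mix (setc x i 0) (setc y i 0) k.
Proof. by apply/rowP => j; rewrite !mxE; case: ifP; case: ifP. Qed.

Lemma outer {R : realType} {n} (a : {ffun 'I_n -> bool} -> R) (M : R) (x y : 'rV[R]_n) :
  in_cube x -> in_cube y -> (forall c, `|a c| <= M) ->
  forall k, (k <= n)%N ->
  PP a (mix x y k) - PP a x <=
    \sum_(i < n | (i < k)%N) (y ord0 i - x ord0 i) * PP (ai a i) (setc x i 0)
  + M * \sum_(i < n | (i < k)%N) (`|y ord0 i - x ord0 i| *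
          \sum_(j < n | (j < i)%N) `|y ord0 j - x ord0 j|).
Proof.
move=> hx hy ha; elim=> [|k IH] hk.
  by rewrite mix0 subrr !big_pred0 ?mulr0 ?addr0 // => j.
have hk' : (k < n)%N by [].
set i := Ordinal hk'.
rewrite !sum_ltS -/i mulrDr.
have -> : PP a (mix x y k.+1) - PP a x =
   (PP a (mix x y k.+1) - PP a (mix x y k)) + (PP a (mix x y k) - PP a x) by ring.
have IH' := IH (ltnW hk).
rewrite (mixS x y k hk') {2}(mix_self x y k hk') PP_diff -/i.
set d := y ord0 i - x ord0 i.
set Q := PP (ai a i) (setc (mix x y k) i 0).
set g := PP (ai a i) (setc x i 0).
have HQ : `|Q - g| <= M * \sum_(j < n | (j < k)%N) `|y ord0 j - x ord0 j|.
  rewrite /Q /g setc_mix.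
  have -> : setc x i 0 = mix (setc x i 0) (setc y i 0) 0 by rewrite mix0.
  have -> : \sum_(j < n | (j < k)%N) `|y ord0 j - x ord0 j| =
     \sum_(j < n | (j < k)%N) `|setc y i 0 ord0 j - setc x i 0 ord0 j|.
    apply: eq_bigr => j hj; rewrite !mxE.
    by have -> : (j == i) = false by apply/negbTE; rewrite -val_eqE /=; lia.
  rewrite mix0; apply: inner => //.
  - by apply: setc_cube => //; lra.
  - by apply: setc_cube => //; lra.
  - exact: ai_bound.
  - exact: ltnW.
have : d * Q <= d * g + `|d| * (M * \sum_(j < n | (j < k)%N) `|y ord0 j - x ord0 j|).
  have -> : d * Q = d * g + d * (Q - g) by ring.
  rewrite lerD2l; apply: le_trans (ler_norm _) _; rewrite normrM.
  by apply: ler_wpM2l.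
move=> H; move: IH'.
set S1 := \sum_(i0 < n | (i0 < k)%N) _.
set S2 := \sum_(i0 < n | (i0 < k)%N) _.
move=> IH'.
have E : `|d| * (M * \sum_(j < n | (j < k)%N) `|y ord0 j - x ord0 j|) =
   M * (`|y ord0 i - x ord0 i| * \sum_(j < n | (j < i)%N) `|y ord0 j - x ord0 j|).
  by rewrite /d /=; ring.
rewrite E in H.
lra.
Qed.

Lemma descent {R : realType} {n} (a : {ffun 'I_n -> bool} -> R) (M : R) (x y : 'rV[R]_n) :
  0 <= M -> in_cube x -> in_cube y -> (forall c, `|a c| <= M) ->
  PP a y <= PP a x + \sum_i (y ord0 i - x ord0 i) * PP (ai a i) (setc x i 0)
            + M * (n%:R / 2) * \sum_i (y ord0 i - x ord0 i) ^+ 2.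
Proof.
move=> hM hx hy ha.
have := @outer R n a M x y hx hy ha n (leqnn n); rewrite mixn.
have E1 : forall F : 'I_n -> R, \sum_(i < n | (i < n)%N) F i = \sum_i F i.
  by move=> F; apply: eq_bigl => i; rewrite ltn_ord.
rewrite !E1.
set S := \sum_(i < n) `|y ord0 i - x ord0 i| * \sum_(j < n | (j < i)%N) `|y ord0 j - x ord0 j|.
have hS : S <= n%:R / 2 * \sum_i (y ord0 i - x ord0 i) ^+ 2.
  have := pair_id (fun i => `|y ord0 i - x ord0 i|).
  have := cs_sum (fun i => `|y ord0 i - x ord0 i|).
  have E : \sum_i `|y ord0 i - x ord0 i| ^+ 2 = \sum_i (y ord0 i - x ord0 i) ^+ 2.
    by apply: eq_bigr => i _; rewrite real_normK ?num_real.
  rewrite /= E -/S.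
  have : 0 <= \sum_i (y ord0 i - x ord0 i) ^+ 2 by apply: sumr_ge0 => i _; apply: sqr_ge0.
  move=> h0 h1 h2; rewrite h2 in h1. lra.
have := ler_wpM2l hM hS.
move=> h1 h2; rewrite -mulrA; lra.
Qed.

Lemma small_s {R : realType} (A B : R) :
  0 <= B -> (forall s, 0 < s <= 1 -> 0 <= 2 * A + s * B) -> 0 <= A.
Proof.
move=> hB H; rewrite leNgt; apply/negP => hA.
have hBA : 0 < B - A by lra.
set s := - A / (B - A).
have hs0 : 0 < s by rewrite /s divr_gt0 //; lra.
have hs1 : s <= 1 by rewrite /s ler_pdivrMr // mul1r; lra.
have : 0 <= 2 * A + s * B by apply: H; rewrite hs0 hs1.
have -> : 2 * A + s * B = (A * B - 2 * A ^+ 2) / (B - A).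
  rewrite /s; field; lra.
rewrite pmulr_lge0 ?invr_gt0 //.
nra.
Qed.

Lemma proj_ineq {R : realType} {n} (yv p x : 'rV[R]_n) :
  is_cube_proj yv p -> in_cube x ->
  0 <= \sum_i (p ord0 i - yv ord0 i) * (x ord0 i - p ord0 i).
Proof.
case=> hp hmin hx.
apply: (@small_s R _ (\sum_i (x ord0 i - p ord0 i) ^+ 2)).
  by apply: sumr_ge0 => i _; apply: sqr_ge0.
move=> s /andP[hs0 hs1].
set q : 'rV[R]_n := p + s *: (x - p).
have hq : in_cube q.
  move=> i; rewrite !mxE.
  have := hp i; have := hx i => /andP[? ?] /andP[? ?].
  have h1 : 0 <= (1 - s) * (p ord0 i + 1) by apply: mulr_ge0; lra.
  have h2 : 0 <= s * (x ord0 i + 1) by apply: mulr_ge0; lra.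
  have h3 : 0 <= (1 - s) * (1 - p ord0 i) by apply: mulr_ge0; lra.
  have h4 : 0 <= s * (1 - x ord0 i) by apply: mulr_ge0; lra.
  apply/andP; split; nra.
have := hmin q hq.
rewrite /sqnorm.
have -> : \sum_(i < n) ((q - yv) ord0 i) ^+ 2 =
   \sum_(i < n) (p ord0 i - yv ord0 i) ^+ 2
   + s * (2 * \sum_i (p ord0 i - yv ord0 i) * (x ord0 i - p ord0 i)
   + s * \sum_i (x ord0 i - p ord0 i) ^+ 2).
  rewrite mulrDr !mulr_sumr -!big_split /=; apply: eq_bigr => i _.
  rewrite !mxE; ring.
have -> : \sum_(i < n) ((p - yv) ord0 i) ^+ 2 = \sum_(i < n) (p ord0 i - yv ord0 i) ^+ 2.
  by apply: eq_bigr => i _; rewrite !mxE.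
move=> h.
have h' : 0 <= s * (2 * \sum_i (p ord0 i - yv ord0 i) * (x ord0 i - p ord0 i)
   + s * \sum_i (x ord0 i - p ord0 i) ^+ 2) by lra.
by rewrite pmulr_rge0 in h'.
Qed.

Definition Acoef {R : realType} {n} (f : seq (clause n)) (b : {ffun 'I_n -> bool}) : R :=
  \sum_(c <- f) clause_val c b.

Lemma Fobj_PP {R : realType} {n} (f : seq (clause n)) :
  Fobj f = PP (@Acoef R n f).
Proof.
apply: funext => z; rewrite /Fobj /PP /FE exchange_big /=.
by apply: eq_bigr => b _; rewrite /Acoef mulr_suml.
Qed.

Lemma Acoef_bound {R : realType} {n} (f : seq (clause n)) b :
  `|@Acoef R n f b| <= (size f)%:R.
Proof.
rewrite /Acoef; elim: f => [|c f IH]; first by rewrite big_nil normr0.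
rewrite big_cons /=; apply: le_trans (ler_normD _ _) _.
rewrite -addn1 natrD addrC lerD //.
by rewrite /clause_val /pm1; case: clause_sat; rewrite ?normrN normr1.
Qed.

Lemma grad_PP {R : realType} {n} (f : seq (clause n)) (z : 'rV[R]_n) :
  grad (Fobj f) z = \row_i PP (ai (@Acoef R n f) i) (setc z i 0).
Proof.
by apply/rowP => i; rewrite /grad !mxE Fobj_PP PP_derive.
Qed.

Lemma step_dec {R : realType} {n} (f : seq (clause n)) (z p : 'rV[R]_n) :
  (0 < n)%N -> (0 < size f)%N -> in_cube z ->
  is_cube_proj (z - (n%:R * (size f)%:R)^-1 *: grad (Fobj f) z) p ->
  PP (@Acoef R n f) p <= PP (@Acoef R n f) z
     - sqnorm (grad_map (n%:R * (size f)%:R)^-1 z p) / (2 * (n%:R * (size f)%:R)).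
Proof.
move=> hn hf hz hproj.
set L : R := n%:R * (size f)%:R.
have hL : 0 < L by rewrite /L mulr_gt0 // ltr0n.
have hm : 0 <= (size f)%:R :> R by [].
have hp : in_cube p := hproj.1.
have hd := @descent R n (@Acoef R n f) (size f)%:R z p hm hz hp (@Acoef_bound R n f).
have hpi := proj_ineq _ _ _ hproj hz.
rewrite grad_PP in hpi.
set g := fun i : 'I_n => PP (ai (@Acoef R n f) i) (setc z i 0).
set D := \sum_i (p ord0 i - z ord0 i) ^+ 2.
set GD := \sum_i (p ord0 i - z ord0 i) * g i.
rewrite (eq_bigr (fun i => - (p ord0 i - z ord0 i) ^+ 2 - L^-1 * ((p ord0 i - z ord0 i) * g i))) in hpi; last first.
  by move=> i _; rewrite !mxE /g /L; ring.
rewrite big_split /= sumrN sumrN -mulr_sumr -/D -/GD in hpi.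
have hGD : GD <= - L * D.
  have : L * (- D - L^-1 * GD) >= 0 by rewrite mulr_ge0 // ltW.
  rewrite mulrDr mulrN mulrN mulrA mulfV ?gt_eqF // mul1r; lra.
have E2 : sqnorm (grad_map L^-1 z p) = L ^+ 2 * D.
  rewrite /sqnorm /grad_map /D mulr_sumr; apply: eq_bigr => i _.
  rewrite !mxE invrK; ring.
rewrite E2.
have -> : L ^+ 2 * D / (2 * L) = L * D / 2.
  by field; rewrite gt_eqF.
move: hd; rewrite -/g -/GD -/D.
have -> : (size f)%:R * (n%:R / 2) * D = L * D / 2 by rewrite /L; ring.
lra.
Qed.

Theorem theorem8 (R : realType) :
  exists C : R, 0 < C /\
  forall (n : nat) (f : seq (clause n)) (x : nat -> 'rV[R]_n) (eps : R),
    (0 < n)%N -> (0 < size f)%N ->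
    let m := size f in
    let eta : R := (n%:R * m%:R)^-1 in
    in_cube (x 0%N) ->
    (forall t : nat,
        is_cube_proj (x t - eta *: grad (Fobj f) (x t)) (x t.+1)) ->
    0 < eps ->
    exists t : nat,
      t%:R <= C * n%:R * m%:R ^+ 2 / eps ^+ 2 /\
      norm2 (grad_map eta (x t) (x t.+1)) < eps.
Proof.
exists 4; split; first by rewrite ltr0n.
move=> n f x eps hn hf m eta hx0 hstep heps.
have hcube : forall t, in_cube (x t) by elim=> // t _; exact: (hstep t).1.
set Gs := fun t => sqnorm (grad_map eta (x t) (x t.+1)).
set L : R := n%:R * m%:R.
have hL : 0 < L by rewrite /L mulr_gt0 // ltr0n.
set A := @Acoef R n f.
have hdec : forall t, PP A (x t.+1) <= PP A (x t) - Gs t / (2 * L).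
  by move=> t; exact: (step_dec f (x t) (x t.+1) hn hf (hcube t) (hstep t)).
have hsum : forall T, PP A (x T) <= PP A (x 0%N) - (\sum_(t < T) Gs t) / (2 * L).
  elim=> [|T IH]; first by rewrite big_ord0 mul0r subr0.
  rewrite big_ord_recr /= mulrDl; have := hdec T; lra.
have hGs0 : forall t, 0 <= Gs t by move=> t; apply: sumr_ge0 => i _; apply: sqr_ge0.
have hbnd : forall T, \sum_(t < T) Gs t <= 4 * n%:R * m%:R ^+ 2.
  move=> T.
  have h1 := @PP_bound R n A m%:R (x T) (hcube T) (@Acoef_bound R n f).
  have h0 := @PP_bound R n A m%:R (x 0%N) (hcube 0%N) (@Acoef_bound R n f).
  have := hsum T.
  case/ler_normlP: h1 => h1a h1b; case/ler_normlP: h0 => h0a h0b.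
  move=> h.
  have h2 : (\sum_(t < T) Gs t) / (2 * L) <= 2 * m%:R by lra.
  rewrite ler_pdivrMr in h2; last by rewrite mulr_gt0.
  by rewrite /L in h2; lra.
apply: contrapT => Hno.
set K : R := 4 * n%:R * m%:R ^+ 2 / eps ^+ 2.
have hK0 : 0 <= K by rewrite /K divr_ge0 ?sqr_ge0 // !mulr_ge0.
have [hK1 hK2] : ((Num.truncn K)%:R <= K) /\ (K < (Num.truncn K).+1%:R).
  by have /andP[] := truncn_itv hK0.
set TT := (Num.truncn K).+1.
have hge : forall t, (t < TT)%N -> eps ^+ 2 <= Gs t.
  move=> t ht.
  have ht' : t%:R <= K.
    apply: le_trans hK1; by rewrite ler_nat -ltnS.
  have hn' : ~ (norm2 (grad_map eta (x t) (x t.+1)) < eps).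
    by move=> hh; apply: Hno; exists t; split.
  rewrite /norm2 in hn'.
  have : eps <= Num.sqrt (Gs t) by rewrite leNgt; apply/negP.
  by move=> he; rewrite -(ler_sqrt _ (hGs0 t)) sqrtr_sqr ger0_norm // ltW.
have : TT%:R * eps ^+ 2 <= 4 * n%:R * m%:R ^+ 2.
  apply: le_trans (hbnd TT).
  have -> : TT%:R * eps ^+ 2 = \sum_(t < TT) eps ^+ 2 by rewrite sumr_const card_ord mulr_natl.
  by apply: ler_sum => t _; apply: hge.
rewrite -ler_pdivlMr ?exprn_gt0 // -/K => h.
have : K < TT%:R by exact: hK2.
by move=> hk; have := lt_le_trans hk h; rewrite ltxx.
Qed.
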